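(* For all $n,k\in\mathbb N$ there exists $N\in\mathbb N$ such that every finite strongly connected digraph $D$ on at least $N$ vertices contains one of the following: (1) a dicycle on at least $n$ vertices; (2) an $n$-narrow semi-chain $(C_1,C_2,\ldots,C_k)$ of $k$ dicycles; (3) an $n$-short $(m,1)$-system of dipaths for some $m\ge (k-1)n+3$.
   Context: All digraphs are finite; a dipath is a directed path, a dicycle a directed cycle, and lengths count edges. A sequence $(C_1,\ldots,C_k)$ of dicycles is a semi-chain if for all $1\le i,j\le k$ we have $V(C_i)\cap V(C_j)\ne\emptyset$ if and only if $|i-j|=1$; it is $n$-narrow if $|V(C_i)|<n$ for every $i$. Let $x,y$ be two, possibly equal, vertices and $m,\ell$ positive integers. An $(m,\ell)$-system of $x$--$y$ dipaths is a system of $m+\ell$ internally disjoint dipaths (or dicycles through $x$ in case $x=y$), $m$ of which are $x$--$y$ dipaths and $\ell$ of which are $y$--$x$ dipaths; an $(m,\ell)$-system of dipaths is such a system for some $x,y$. It is $n$-short if, in case $x\ne y$, $|V(P)\cup V(Q)|<n$ for every $x$--$y$ dipath $P$ and every $y$--$x$ dipath $Q$ of the system, and, in case $x=y$, every dicycle of the system has length less than $n$. *)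

(* Defs.v *)
(* A (loopless) digraph is a finite vertex type T : finType
   with an irreflexive edge relation e : rel T (parallel edges are irrelevant). *)
From mathcomp Require Import all_boot.
Set Implicit Arguments. Unset Strict Implicit. Unset Printing Implicit Defensive.

Section Digraphs.
Variables (T : finType) (e : rel T).

Definition strongly_connected : Prop := forall u v : T, connect e u v.

(* A dipath is given by its full vertex sequence; dipath a b p: p is an
   a--b dipath (distinct vertices, consecutive ones joined by edges). *)
Definition dipath (a b : T) (p : seq T) : bool :=
  match p with
  | [::] => false
  | z :: s => [&& z == a, path e z s, uniq p & last z s == b]
  end.

(* A dicycle is given by the cyclic sequence of its (distinct) vertices;
   its vertex set is the set of elements of c, its length is size c. *)
Definition dicycle (c : seq T) : bool := [&& c != [::], cycle e c & uniq c].

Definition narrow_semi_chain (n k : nat) (cs : seq (seq T)) : Prop :=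
  [/\ size cs = k,
      all dicycle cs,
      all (fun c => size c < n) cs &
      forall i j, i < k -> j < k -> i != j ->
        has (fun v => v \in nth [::] cs i) (nth [::] cs j)
        = (i == j.+1) || (j == i.+1)].

Definition system (x y : T) (m l : nat) (F G : seq (seq T)) : Prop :=
  [/\ size F = m, size G = l,
      (if x != y then all (dipath x y) F && all (dipath y x) G
       else all (fun c => dicycle c && (x \in c)) (F ++ G)),
      uniq (F ++ G) &
      forall i j, i < size (F ++ G) -> j < size (F ++ G) -> i != j ->
        forall v, v \in nth [::] (F ++ G) i -> v \in nth [::] (F ++ G) j ->
          v = x \/ v = y].

Definition n_short_system (n : nat) (x y : T) (F G : seq (seq T)) : Prop :=
  if x != y then
    forall P Q, P \in F -> Q \in G -> size (undup (P ++ Q)) < n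
  else forall c, c \in F ++ G -> size c < n.

End Digraphs.

(* Main.v *)
Require Import Defs.
From mathcomp Require Import all_boot zify.
From Stdlib Require Import Classical.
Set Implicit Arguments. Unset Strict Implicit. Unset Printing Implicit Defensive.

Lemma find_iota_spec (P : pred nat) K j : j < K -> P j ->
  let i := find P (iota 0 K) in [/\ i <= j, P i & forall i', i' < i -> ~~ P i'].
Proof.
move=> jK Pj i.
have hi : i <= j.
  rewrite leqNgt; apply/negP => ji.
  have := before_find 0 ji; rewrite nth_iota // add0n Pj //.
have iK : i < K by apply: leq_ltn_trans hi jK.
split=> //.
  have := nth_find 0 (_ : has P (iota 0 K)); rewrite nth_iota // add0n; apply.
  by apply/hasP; exists j; rewrite // mem_iota.
move=> i' ii'; have := before_find 0 ii'; rewrite nth_iota ?add0n //.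
by move=> ->. lia.
Qed.

Section Dist.
Variables (T : finType) (e : rel T).

Definition walk a p b := path e a p && (last a p == b).
Definition hasw a b i := [exists t : i.-tuple T, walk a t b].

Lemma haswP a b i : reflect (exists p, size p = i /\ walk a p b) (hasw a b i).
Proof.
apply: (iffP existsP) => [[t Ht]|[p [<- Hp]]].
  by exists t; rewrite size_tuple.
by exists (in_tuple p).
Qed.

Definition dist a b := find (hasw a b) (iota 0 #|T|).

Lemma walk_cat a p b q c : walk a p b -> walk b q c -> walk a (p ++ q) c.
Proof.
rewrite /walk cat_path last_cat => /andP[-> /eqP->] /andP[-> ->]; done.
Qed.

Variable sc : strongly_connected e.

Lemma walk_small a b : exists p, size p < #|T| /\ walk a p b.
Proof.
have /connectP [p Hp ->] := sc a b.
case: (shortenP Hp) => p' Hp' Hu _.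
exists p'; split; last by rewrite /walk Hp' eqxx.
have := card_uniqP Hu; have := max_card (mem (a :: p')).
by move=> + H; rewrite H.
Qed.

Lemma dist_spec a b :
  [/\ exists p, size p = dist a b /\ walk a p b
    & forall p, walk a p b -> dist a b <= size p].
Proof.
have [p0 [s0 w0]] := walk_small a b.
have h0 : hasw a b (size p0) by apply/haswP; exists p0.
have [le1 h1 h2] := find_iota_spec s0 h0.
split; first by apply/haswP.
move=> p wp; rewrite leqNgt; apply/negP => lt.
by have := h2 _ lt; rewrite (_ : hasw a b (size p)) //; apply/haswP; exists p.
Qed.

Lemma distE a b : exists p, size p = dist a b /\ walk a p b.
Proof. by case: (dist_spec a b). Qed.

Lemma dist_min a b p : walk a p b -> dist a b <= size p.
Proof. by case: (dist_spec a b) => _; apply. Qed.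

Lemma dist0 a b : (dist a b == 0) = (a == b).
Proof.
apply/idP/idP.
  move=> /eqP d0; have [p [s w]] := distE a b.
  by case: p s w => [|c p] s /andP[_ /eqP <-] //; rewrite d0 in s.
move=> /eqP ->; have := dist_min (p := [::]) (a := b) (b := b).
by rewrite /walk /= eqxx => /(_ isT); rewrite leqn0.
Qed.

End Dist.

Section Tree.
Variables (T : finType) (e : rel T).
Variable sc : strongly_connected e.
Variable x : T.

Notation d v := (dist e v x).
Definition nxt v := odflt v [pick c | e v c && (dist e c x == (dist e v x).-1)].

Lemma nxtP v : v != x -> e v (nxt v) /\ d (nxt v) = (d v).-1.
Proof.
move=> vx; have [p [s w]] := distE sc v x.
case: p s w => [|c p] s.
  by rewrite /walk /= => /eqP vx'; rewrite vx' eqxx in vx.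
rewrite /walk /= => /andP[/andP[evc pc] lc].
have h1 : d c <= size p by apply: (dist_min sc); rewrite /walk pc lc.
have [q [sq wq]] := distE sc c x.
have h2 : d v <= size (c :: q).
  by apply: (dist_min sc); move: wq; rewrite /walk /= evc.
rewrite /nxt; case: pickP => [c' /andP[H1 /eqP H2]|H] //=.
have := H c; rewrite evc /=; move: h1 h2; rewrite /= sq -s /=.
move=> h1 h2 /negbT/eqP; lia.
Qed.

Lemma d_pos v : v != x -> 0 < d v.
Proof. by move=> vx; rewrite lt0n (dist0 sc). Qed.

Lemma iter_d v i : i <= d v -> d (iter i nxt v) = d v - i.
Proof.
elim: i => [|i IH] hi; first by rewrite subn0.
rewrite iterS; have IH' := IH (ltnW hi).
have nx : iter i nxt v != x by rewrite -(dist0 sc) IH'; lia.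
by have [_ ->] := nxtP nx; rewrite IH'; lia.
Qed.

Lemma iter_e v i : i < d v -> e (iter i nxt v) (iter i.+1 nxt v).
Proof.
move=> hi; have nx : iter i nxt v != x by rewrite -(dist0 sc) iter_d; lia.
by have [-> _] := nxtP nx.
Qed.

Lemma iter_x v : iter (d v) nxt v = x.
Proof. by apply/eqP; rewrite -(dist0 sc) iter_d // subnn. Qed.

Lemma traj_path y h : h <= d y -> path e y (traject nxt (nxt y) h).
Proof.
elim: h y => [|h IH] y hy //=.
have yx : y != x by rewrite -(dist0 sc); lia.
have [-> dn] := nxtP yx; rewrite IH //; lia.
Qed.

Lemma traj_uniq y h : h <= (d y).+1 -> uniq (traject nxt y h).
Proof.
elim: h y => [|h IH] y hy //=.
case: (eqVneq y x) => [yx|yx].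
  by move: hy; rewrite yx (_ : dist e x x = 0) //; [case: h {IH}|apply/eqP; rewrite (dist0 sc)].
have [_ dn] := nxtP yx.
rewrite IH ?dn ?andbT; last by have := d_pos yx; lia.
apply/trajectP => -[i hi] /(congr1 (fun v => d v)).
rewrite -iterSr iter_d; lia.
Qed.

End Tree.

Lemma card_fiber (T U : finType) (A : {pred T}) (S : {pred U}) (f : T -> U) b :
  (forall v, v \in A -> f v \in S) ->
  (forall z, z \in S -> #|[pred v in A | f v == z]| <= b) ->
  #|A| <= #|S| * b.
Proof.
move=> hA hS.
rewrite -sum1_card (partition_big f (mem S)) //=.
rewrite -sum1_card big_distrl /= leq_sum // => z zS.
by rewrite mul1n; apply: leq_trans (hS z zS); rewrite -sum1_card.
Qed.

Section LemA.
Variables (T : finType) (e : rel T).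
Variable irr : irreflexive e.
Variable sc : strongly_connected e.
Variables (n m : nat) (x : T).
Variable nolong : forall c, dicycle e c -> size c < n.

Notation d v := (dist e v x).
Notation nxt := (nxt e x).

Lemma dx : d x = 0.
Proof. by apply/eqP; rewrite (dist0 sc). Qed.


Lemma cyc_dicycle y : e x y -> dicycle e (x :: traject nxt y (d y)).
Proof.
move=> exy; rewrite /dicycle /= -[x in rcons _ x](iter_x sc x y) -trajectSr /=.
rewrite exy (traj_path sc) // (traj_uniq sc) // andbT.
rewrite andbT /=; apply/trajectP => -[i hi] /(congr1 (fun v => d v)).
rewrite dx (iter_d sc); lia.
Qed.

Lemma Ybound y : e x y -> (d y).+1 < n.
Proof. by move=> exy; have := nolong (cyc_dicycle exy); rewrite /= size_traject. Qed.

Definition Aset v := [set y | e x y && (d v <= d y) && (iter (d y - d v) nxt y == v)].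
Definition ch v := [set c | (c != x) && (nxt c == v) && (Aset c != set0)].

Lemma A_bound t : (forall v, #|ch v| <= m) ->
  forall v, n.-1 <= d v + t -> #|Aset v| <= (m.+1) ^ t.
Proof.
move=> hch; elim: t => [|t IH] v hv.
  rewrite expn0 (_ : Aset v = set0) ?cards0 //; apply/setP => y.
  rewrite !inE; apply/negP => /andP[/andP[exy h1] _]; have := Ybound exy; lia.
rewrite (cardsD1 v).
set f := fun y => iter (d y - d v).-1 nxt y.
have key : forall y, y \in Aset v :\ v ->
   [/\ nxt (f y) = v, d (f y) = (d v).+1, f y != x & y \in Aset (f y)].
  move=> y; rewrite !inE => /andP[yv /andP[/andP[exy h1] /eqP h2]].
  have lt : d v < d y.
    rewrite ltn_neqAle h1 andbT; apply/negP => /eqP E.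
    by move: h2; rewrite E subnn /= => E'; rewrite E' eqxx in yv.
  have df : d (f y) = (d v).+1 by rewrite /f (iter_d sc); lia.
  have nf : nxt (f y) = v by rewrite /f -iterS prednK ?subn_gt0.
  have fx : f y != x by rewrite -(dist0 sc) df.
  split=> //; rewrite exy df lt /= (_ : d y - (d v).+1 = (d y - d v).-1) //.
  lia.
have : #|Aset v :\ v| <= #|ch v| * (m.+1) ^ t.
  apply: (card_fiber (f := f)).
    move=> y yA; have [h1 h2 h3 h4] := key y yA.
    rewrite inE h3 h1 eqxx /=; apply/set0Pn; by exists y.
  move=> c; rewrite inE => /andP[/andP[cx /eqP nc] _].
  have dc : d c = (d v).+1.
    have [_] := nxtP sc cx; rewrite nc; have := d_pos sc cx; lia.
  apply: leq_trans (IH c _); last lia.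
  apply: subset_leq_card; apply/subsetP => y; rewrite inE => /andP[yA /eqP <-].
  by have [] := key y yA.
move=> H; rewrite expnS; have := hch v.
move: H; set a := #|_ :\ _|; set b := #|ch v|; set p := _ ^ t.
case: (v \in Aset v) => /= H1 H2.
  have : b * p <= m * p by rewrite leq_mul2r H2 orbT.
  have : 1 <= p by rewrite expn_gt0.
  nia.
have : b * p <= m * p by rewrite leq_mul2r H2 orbT.
have : 1 <= p by rewrite expn_gt0.
nia.
Qed.

Lemma A_x : Aset x = [set y | e x y].
Proof.
apply/setP => y; rewrite !inE dx subn0 iter_x // eqxx andbT /=.
by case: (e x y).
Qed.

Lemma exists_hub : (m.+1) ^ n.-1 < #|[set y | e x y]| -> exists z, m < #|ch z|.
Proof.
move=> H; apply/existsP; rewrite -[X in is_true X]negbK; apply/negP.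
rewrite negb_exists => /forallP hz.
have hch : forall v, #|ch v| <= m by move=> v; rewrite leqNgt hz.
have := A_bound (t := n.-1) hch (v := x); rewrite A_x dx add0n => /(_ (leqnn _)).
by rewrite leqNgt H.
Qed.


Section Hub.
Variable z : T.

Definition ych c := odflt x [pick y in Aset c].

Lemma ychP c : c \in ch z ->
  [/\ e x (ych c), nxt c = z, d c = (d z).+1, d c <= d (ych c)
    & iter (d (ych c) - d c) nxt (ych c) = c].
Proof.
rewrite inE => /andP[/andP[cx /eqP nc] /set0Pn An].
have dc : d c = (d z).+1.
  have [_] := nxtP sc cx; rewrite nc; have := d_pos sc cx; lia.
rewrite /ych; case: pickP => [y|H]; last first.
  by case: An => y yA; have := H y; rewrite yA.
by rewrite inE => /andP[/andP[-> h1] /eqP h2].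
Qed.

Definition deep c v := (d z < d v) && (iter (d v - (d z).+1) nxt v == c).

Lemma deep_uniq c c' v : deep c v -> deep c' v -> c = c'.
Proof. by move=> /andP[_ /eqP <-] /andP[_ /eqP <-]. Qed.

Lemma deep_y c : c \in ch z -> deep c (ych c).
Proof.
move=> /ychP [h1 h2 h3 h4 h5]; rewrite /deep -h3 h5 eqxx andbT; lia.
Qed.

Lemma memP c v : c \in ch z ->
  v \in traject nxt (ych c) (d (ych c) - d z).+1 -> v = z \/ deep c v.
Proof.
move=> /ychP [h1 h2 h3 h4 h5] /trajectP [a ha ->].
set y := ych c in h1 h4 h5 ha *.
case: (eqVneq a (d y - d z)) => [->|ne].
  left; rewrite (_ : d y - d z = (d y - d c).+1); last lia.
  by rewrite iterS h5.
right; rewrite /deep (iter_d sc); last lia.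
rewrite -iterD (_ : d y - a - (d z).+1 + a = d y - d c); last lia.
rewrite h5 eqxx andbT; lia.
Qed.

Lemma last_P c : c \in ch z -> iter (d (ych c) - d z) nxt (ych c) = z.
Proof.
move=> /ychP [h1 h2 h3 h4 h5].
rewrite (_ : d (ych c) - d z = (d (ych c) - d c).+1); last lia.
by rewrite iterS h5.
Qed.

Lemma dz_le c : c \in ch z -> d z < d (ych c).
Proof. by move=> /ychP [h1 h2 h3 h4 h5]; lia. Qed.

End Hub.

Lemma memCy c v : c \in ch x ->
  v \in x :: traject nxt (ych c) (d (ych c)) -> v = x \/ deep x c v.
Proof.
move=> cc; rewrite inE => /predU1P [->|H]; first by left.
have : v \in traject nxt (ych c) (d (ych c) - d x).+1.
  move/trajectP: H => [a ha ->]; apply/trajectP; exists a => //; rewrite dx; lia.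
by case/(memP cc) => [->|]; [left|right].
Qed.


Lemma hub_system z : m < #|ch z| ->
  exists y F G, system e x y m 1 F G /\ n_short_system n x y F G.
Proof.
move=> hm.
have hsz : m < size (enum (ch z)) by rewrite -cardE.
have irr' : forall c, c \in ch z -> ych c != x.
  move=> c /ychP [h1 _ _ _ _]; apply/eqP => E; by rewrite E irr in h1.
case: (eqVneq z x) => [zx|xz].
-
  subst z.
  set cs := take m.+1 (enum (ch x)).
  have scs : size cs = m.+1 by rewrite size_takel.
  have ucs : uniq cs by rewrite take_uniq // enum_uniq.
  have ics : forall c, c \in cs -> c \in ch x by move=> c /mem_take; rewrite mem_enum.
  set Cy := fun c => x :: traject nxt (ych c) (d (ych c)).
  have FG : map Cy (take m cs) ++ map Cy (drop m cs) = map Cy cs.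
    by rewrite -map_cat cat_take_drop.
  have yCy : forall c, c \in ch x -> ych c \in Cy c.
    move=> c cc; have := dz_le cc; rewrite dx /Cy.
    by case: (d (ych c)) => // k _; rewrite /= !inE eqxx orbT.
  have injCy : {in cs &, injective Cy}.
    move=> c1 c2 i1 i2 E.
    have := yCy c1 (ics _ i1); rewrite E => /(memCy (ics _ i2)) [H|H].
      by have := irr' c1 (ics _ i1); rewrite H eqxx.
    exact: deep_uniq (deep_y (ics _ i1)) H.
  exists x, (map Cy (take m cs)), (map Cy (drop m cs)); split; last first.
    rewrite /n_short_system eqxx FG => c /mapP [c' c'in ->].
    apply: nolong; apply: cyc_dicycle.
    by have [] := ychP (ics _ c'in).
  split.
  + by rewrite size_map size_take scs ltnSn.
  + by rewrite size_map size_drop scs subSnn.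
  + rewrite eqxx /= FG all_map; apply/allP => c cin /=.
    rewrite inE eqxx andbT; apply: cyc_dicycle.
    by have [] := ychP (ics _ cin).
  + by rewrite FG map_inj_in_uniq.
  + rewrite FG size_map => i j hi hj ij v.
    rewrite (nth_map x) // (nth_map x) //.
    have ii := ics _ (mem_nth x hi); have jj := ics _ (mem_nth x hj).
    move=> /(memCy ii) [->|H1]; first by left.
    move=> /(memCy jj) [->|H2]; first by left.
    have := deep_uniq H1 H2; move/eqP; rewrite nth_uniq // => /eqP E.
    by rewrite E eqxx in ij.
-
  set cs := take m (enum (ch z)).
  have scs : size cs = m by rewrite size_takel // ltnW.
  have ucs : uniq cs by rewrite take_uniq // enum_uniq.
  have ics : forall c, c \in cs -> c \in ch z by move=> c /mem_take; rewrite mem_enum.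
  set P := fun c => x :: traject nxt (ych c) (d (ych c) - d z).+1.
  set Q := traject nxt z (d z).+1.
  have memP' : forall c v, c \in ch z -> v \in P c -> [\/ v = x, v = z | deep z c v].
    move=> c v cc; rewrite inE => /predU1P [->|H]; first by constructor 1.
    by case/(memP cc): H => [->|]; [constructor 2|constructor 3].
  have memQ : forall v, v \in Q -> d v <= d z.
    move=> v /trajectP [a ha ->]; rewrite (iter_d sc); lia.
  have yP : forall c, ych c \in P c by move=> c; rewrite /P /= !inE eqxx orbT.
  have ndeepx : forall c, ~~ deep z c x by move=> c; rewrite /deep dx.
  have ndeepz : forall c, ~~ deep z c z by move=> c; rewrite /deep ltnn.
  have injP : {in cs &, injective P}.
    move=> c1 c2 i1 i2 E.
    have := yP c1; rewrite E => /(memP' _ _ (ics _ i2)) [H|H|H].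
    + by have := irr' c1 (ics _ i1); rewrite H eqxx.
    + by have := dz_le (ics _ i1); rewrite H ltnn.
    exact: deep_uniq (deep_y (ics _ i1)) H.
  have QnP : Q \notin map P cs.
    apply/mapP => -[c _ E]; move: E; rewrite /Q /P /= => -[E].
    by rewrite E eqxx in xz.
  exists z, (map P cs), [:: Q]; split; last first.
    rewrite /n_short_system eq_sym xz => P' Q' /mapP [c cin ->]; rewrite inE => /eqP ->.
    have cc := ics _ cin.
    have ey : e x (ych c) by have [] := ychP cc.
    have hy := dz_le cc; have ly := last_P cc.
    rewrite /P; set y := ych c in ey hy ly *.
    apply: leq_ltn_trans (Ybound ey).
    rewrite -(size_traject nxt y (d y).+1).
    apply: uniq_leq_size; first exact: undup_uniq.
    move=> v; rewrite mem_undup mem_cat => /orP [|].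
      rewrite inE => /predU1P [->|/trajectP [a ha ->]].
        by apply/trajectP; exists (d y); rewrite ?iter_x.
      by apply/trajectP; exists a => //; move: ha; rewrite -/y; lia.
    move=> /trajectP [a ha ->]; rewrite -ly -iterD.
    apply/trajectP; exists (a + (d y - d z)) => //; lia.
  split.
  + by rewrite size_map scs.
  + by [].
  + rewrite eq_sym xz /= andbT; apply/andP; split.
      rewrite all_map; apply/allP => c cin /=.
      have cc := ics _ cin; have [ey _ _ _ _] := ychP cc.
      have hy := dz_le cc.
      apply/and4P; split => //.
      - by rewrite /= ey (traj_path sc) //; lia.
      - change (uniq (x :: traject nxt (ych c) (d (ych c) - d z).+1)).
        rewrite cons_uniq (traj_uniq sc) ?andbT; last lia.
        apply/negP => H.
        case/(memP cc): H => [H1|H1]; first by rewrite H1 eqxx in xz.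
        by have := ndeepx c; rewrite H1.
      - by rewrite /= last_traject (last_P cc).
    rewrite eqxx (traj_path sc) // last_traject (iter_x sc) eqxx andbT /=.
    exact: (traj_uniq sc (y := z) (h := (d z).+1)).
  + by rewrite cat_uniq /= map_inj_in_uniq // ucs /= orbF QnP.
  + rewrite size_cat size_map scs /= addn1 => i j hi hj ij v.
    pose lab i v := if i < m then deep z (nth x cs i) v else d v <= d z.
    have hmem : forall i, i < m.+1 -> v \in nth [::] (map P cs ++ [:: Q]) i ->
        [\/ v = x, v = z | lab i v].
      move=> i' hi'; rewrite nth_cat size_map scs /lab.
      case: ifP => il.
        rewrite (nth_map x) ?scs //.
        by apply: (memP' _ _ (ics _ (mem_nth x _))); rewrite scs.
      have -> : i' - m = 0 by lia.
      by move=> /memQ H; constructor 3.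
    move=> /(hmem _ hi) [->|->|H1]; [by left|by right|].
    move=> /(hmem _ hj) [->|->|H2]; [by left|by right|].
    exfalso; move: H1 H2; rewrite /lab.
    case: ifP => il; case: ifP => jl.
    * move=> H1 H2; have := deep_uniq H1 H2; move/eqP; rewrite nth_uniq ?scs //.
      by rewrite (negbTE ij).
    * by move=> /andP [H1 _] H2; have := leq_ltn_trans H2 H1; rewrite ltnn.
    * by move=> H1 /andP [H2 _]; have := leq_ltn_trans H1 H2; rewrite ltnn.
    * move=> _ _; have ei : i = m by lia.
      have ej : j = m by lia.
      by rewrite ei ej eqxx in ij.
Qed.

End LemA.

Section Greedy.
Variables (T : eqType) (C : nat -> seq T) (L B k : nat).
Definition inter i j := has (fun v => v \in C i) (C j).
Hypothesis h1 : forall i, i.+1 < L -> inter i i.+1.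
Hypothesis h2 : forall i j, i < j -> j < L -> inter i j -> j <= i + B.
Hypothesis hL : k * B + 2 <= L.

Lemma inter_sym i j : inter i j = inter j i.
Proof. exact: has_sym. Qed.

Definition next i := \max_(j < L | inter i j) j.

Lemma nextP i : i.+1 < L ->
  [/\ inter i (next i), i < next i, next i <= i + B, next i < L
    & forall j, j < L -> next i < j -> ~~ inter i j].
Proof.
move=> hi.
have A0 : 0 < #|[pred j : 'I_L | inter i j]|.
  by apply/card_gt0P; exists (Ordinal hi); rewrite inE h1.
have [j0 j0A E] := eq_bigmax_cond (fun j : 'I_L => nat_of_ord j) A0.
have E' : next i = j0 by rewrite /next -E.
have lt : i < next i.
  by rewrite /next (leq_bigmax_cond (Ordinal hi) (h1 hi)).
split => //.
- by rewrite E'; move: j0A; rewrite inE.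
- apply/bigmax_leqP => j ij; case: (leqP j i) => ji; first lia.
  by apply: h2.
- by rewrite E'.
- move=> j jL nj; apply/negP => ij.
  have := leq_bigmax_cond (P := fun j : 'I_L => inter i j) (F := fun j : 'I_L => nat_of_ord j) (Ordinal jL) ij.
  rewrite -/(next i) /=; lia.
Qed.

Definition idx t := iter t next 0.

Lemma idx_bound t : t < k -> idx t <= t * B /\ idx t < L.
Proof.
elim: t => [|t IH] ht; first by rewrite /idx /=; split => //; lia.
have [IH1 IH2] := IH (ltnW ht).
have hi : (idx t).+1 < L.
  have : t * B <= (k - 1) * B by rewrite leq_mul2r; apply/orP; right; lia.
  nia.
have [_ _ N3 N4 _] := nextP hi.
rewrite /idx iterS -/(idx t); split => //; nia.
Qed.

Lemma idx_step t : t.+1 < k -> [/\ inter (idx t) (idx t.+1), idx t < idx t.+1, idx t.+1 < L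
   & forall j, j < L -> idx t.+1 < j -> ~~ inter (idx t) j].
Proof.
move=> ht; have [b1 b2] := idx_bound (ltnW ht).
have hi : (idx t).+1 < L.
  have : t * B <= (k - 1) * B by rewrite leq_mul2r; apply/orP; right; lia.
  nia.
have [N1 N2 N3 N4 N5] := nextP hi.
by rewrite /idx iterS -/(idx t).
Qed.

Lemma idx_mono s t : s < t -> t < k -> idx s < idx t.
Proof.
elim: t => [|t IH] // st tk.
have [_ lt _ _] := idx_step tk.
case: (ltngtP s t) => [h|h|->] //; last lia.
by apply: ltn_trans (IH h (ltnW tk)) lt.
Qed.

Lemma idx_pattern s t : s < k -> t < k -> s != t ->
  inter (idx s) (idx t) = (s == t.+1) || (t == s.+1).
Proof.
wlog st : s t / s < t.
  move=> W sk tk nst; case: (ltngtP s t) => h.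
  - exact: W.
  - by rewrite inter_sym orbC W // eq_sym.
  - by rewrite h eqxx in nst.
move=> sk tk _.
have -> : (s == t.+1) = false by apply/negbTE; lia.
case: (eqVneq t s.+1) => [E|ne] /=.
  by subst t; have [] := idx_step tk.
have s1k : s.+1 < k by lia.
have [_ _ _ N] := idx_step s1k.
apply/negbTE; apply: N; first by have [] := idx_bound tk.
by apply: idx_mono => //; lia.
Qed.

End Greedy.

Lemma last_take_nth0 (T : Type) (a d : T) p i : i <= size p -> last a (take i p) = nth d (a :: p) i.
Proof.
elim: p a i => [|c p IH] a [|i] //= hi.
by rewrite IH.
Qed.

Lemma last_take_nth (T : Type) (a : T) p i : i <= size p -> last a (take i p) = nth a (a :: p) i.
Proof. exact: last_take_nth0. Qed.

Section LemB.
Variables (T : finType) (e : rel T).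
Variable sc : strongly_connected e.
Variables (n k : nat).
Variable nolong : forall c, dicycle e c -> size c < n.

Lemma cyc_walk c u w : cycle e c -> u \in c -> w \in c ->
  exists q, walk e u q w /\ size q < size c.
Proof.
move=> cc uc wc; case/splitPr: uc cc wc => c1 c2 cc wc.
have cr : cycle e (u :: (c2 ++ c1)).
  have -> : u :: (c2 ++ c1) = rot (size c1) (c1 ++ u :: c2) by rewrite rot_size_cat.
  by rewrite rot_cycle.
have wr : w \in u :: (c2 ++ c1) by move: wc; rewrite !(mem_cat, inE); case: (w == u) (w \in c1) (w \in c2) => [] [] [].
have sz : size (u :: (c2 ++ c1)) = size (c1 ++ u :: c2) by rewrite /= !size_cat /=; lia.
rewrite -sz; move: cr wr; move: (c2 ++ c1) => r cr.
rewrite inE => /predU1P [->|].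
  by exists [::]; rewrite /walk /= eqxx.
move=> wr'; case/splitPr: wr' cr => r1 r2 cr; exists (rcons r1 w); split; last first.
  by rewrite size_rcons /= size_cat /=; lia.
move: cr; rewrite /= rcons_cat /= cat_path /walk last_rcons eqxx andbT.
by rewrite rcons_path => /andP [-> /= /andP [-> _]].
Qed.

Definition sp u w : seq T :=
  if [pick t : (dist e u w).-tuple T | walk e u t w] is Some t then val t else [::].

Lemma spP u w : walk e u (sp u w) w.
Proof.
rewrite /sp; case: pickP => [t //|H].
have [p [s wp]] := distE sc u w.
have := H (Tuple (introT eqP s)); by rewrite /= wp.
Qed.

Definition cyc u w := u :: shorten u (sp u w).

Lemma cycP u w : e w u -> [/\ dicycle e (cyc u w), u \in cyc u w & w \in cyc u w].
Proof.
move=> ewu; have /andP [pa /eqP la] := spP u w.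
have [pa' up' lst] : [/\ path e u (shorten u (sp u w)), uniq (u :: shorten u (sp u w))
   & last u (shorten u (sp u w)) = last u (sp u w)].
  by case: (shortenP pa).
rewrite /cyc; split; last by have := mem_last u (shorten u (sp u w)); rewrite lst la.
  by rewrite /dicycle /= rcons_path pa' lst la ewu; move: up' => /= ->.
by rewrite mem_head.
Qed.

Variables (a b : T) (p : seq T).
Hypothesis wp : walk e a p b.
Hypothesis minp : forall q, walk e a q b -> size p <= size q.

Notation v i := (nth a (a :: p) i).

Lemma v_edge i : i < size p -> e (v i) (v i.+1).
Proof. by move: wp => /andP [/(pathP a) H _]; apply: H. Qed.

Lemma sub_lower i j q : i <= j -> j <= size p -> walk e (v i) q (v j) -> j - i <= size q.
Proof.
move=> ij js wq.
have w1 : walk e a (take i p) (v i).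
  rewrite /walk last_take_nth ?eqxx ?andbT; last lia.
  by apply: take_path; case/andP: wp.
have w2 : walk e (v j) (drop j p) b.
  move: wp; rewrite /walk -{1}(cat_take_drop j p) cat_path last_take_nth //.
  case/andP => /andP [_ ->] /=.
  by rewrite -{1}(cat_take_drop j p) last_cat last_take_nth.
have := minp (walk_cat (walk_cat w1 wq) w2).
rewrite !size_cat size_take size_drop.
case: (ltnP i (size p)) => hi; lia.
Qed.

Definition C i := cyc (v i.+1) (v i).

Lemma C_prop i : i < size p -> [/\ dicycle e (C i), v i.+1 \in C i & v i \in C i].
Proof. by move=> hi; apply: cycP; apply: v_edge. Qed.

Lemma C_far i j : i < j -> j < size p -> inter C i j -> j <= i + (2 * n).
Proof.
move=> ij jp /hasP [w wj wi].
have [ci vi1 vi] := C_prop (ltn_trans ij jp).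
have [cj vj1 vj] := C_prop jp.
have cyi : cycle e (C i) by case/and3P: ci.
have cyj : cycle e (C j) by case/and3P: cj.
have [q1 [w1 s1]] := cyc_walk cyi vi wi.
have [q2 [w2 s2]] := cyc_walk cyj wj vj1.
have := sub_lower (_ : i <= j.+1) jp (walk_cat w1 w2).
have := nolong ci; have := nolong cj; rewrite size_cat; lia.
Qed.

Lemma lemB : k * (2 * n) + 2 <= size p -> exists cs, narrow_semi_chain e n k cs.
Proof.
move=> hL.
have h1 : forall i, i.+1 < size p -> inter C i i.+1.
  move=> i hi; apply/hasP; exists (v i.+1).
    by have [] := C_prop hi.
  by have [] := C_prop (ltnW hi).
have h2 : forall i j, i < j -> j < size p -> inter C i j -> j <= i + 2 * n.
  by move=> i j; apply: C_far.
set I := idx C (size p).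
exists (map (fun t => C (I t)) (iota 0 k)); split.
- by rewrite size_map size_iota.
- apply/allP => c /mapP [t]; rewrite mem_iota add0n => /andP [_ tk] ->.
  by have [_ /C_prop []] := idx_bound h1 h2 hL tk.
- apply/allP => c /mapP [t]; rewrite mem_iota add0n => /andP [_ tk] ->.
  by have [_ /C_prop [/nolong]] := idx_bound h1 h2 hL tk.
- move=> i j ik jk ij.
  rewrite (nth_map 0) ?size_iota // (nth_map 0) ?size_iota // !nth_iota // !add0n.
  exact: (idx_pattern h1 h2 hL ik jk ij).
Qed.

End LemB.

Section Count.
Variables (T : finType) (e : rel T).
Variable sc : strongly_connected e.
Variables (r : T) (D : nat).
Hypothesis hdeg : forall x, #|[set y | e x y]| <= D.

Definition S i := [set v | dist e r v == i].

Definition par v := odflt v [pick u | e u v && (dist e r u == (dist e r v).-1)].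

Lemma parP v : v != r -> e (par v) v /\ dist e r (par v) = (dist e r v).-1.
Proof.
move=> vr; have [p [s w]] := distE sc r v.
case/lastP: p s w => [|p' u] s.
  by rewrite /walk /= => /eqP E; rewrite E eqxx in vr.
rewrite /walk rcons_path last_rcons => /andP [/andP [pa eu] /eqP uv].
subst u.
have h1 : dist e r (last r p') <= size p' by apply: (dist_min sc); rewrite /walk pa eqxx.
have [q [sq wq]] := distE sc r (last r p').
have h2 : dist e r v <= size (rcons q v).
  apply: (dist_min sc); move: wq; rewrite /walk rcons_path last_rcons eqxx andbT.
  by case/andP => -> /eqP ->.
move: h2; rewrite size_rcons sq => h2.
rewrite size_rcons in s.
rewrite /par; case: pickP => [u /andP [H1 /eqP H2]|H] //=.
have := H (last r p'); rewrite eu /=; move/negbT/eqP; lia.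
Qed.

Lemma S_bound i : #|S i| <= D ^ i.
Proof.
elim: i => [|i IH].
  rewrite expn0 (_ : S 0 = [set r]) ?cards1 //; apply/setP => v.
  by rewrite !inE (dist0 sc) eq_sym.
apply: leq_trans (_ : #|S i| * D <= _); last by rewrite expnS mulnC leq_mul2l IH orbT.
apply: (card_fiber (f := par)).
  move=> v; rewrite !inE => /eqP dv.
  have vr : v != r by rewrite eq_sym -(dist0 sc) dv.
  by have [_ ->] := parP vr; rewrite dv.
move=> z _; apply: leq_trans (hdeg z); apply: subset_leq_card.
apply/subsetP => v; rewrite !inE => /andP [/eqP dv /eqP <-].
have vr : v != r by rewrite eq_sym -(dist0 sc) dv.
by have [-> _] := parP vr.
Qed.

Lemma U_bound R j : j <= R -> 0 < D -> #|[set v | dist e r v < j]| <= j * D ^ R.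
Proof.
move=> + D0; elim: j => [|j IH] hj.
  by rewrite (_ : [set v | _] = set0) ?cards0 //; apply/setP => v; rewrite !inE.
have sub : [set v | dist e r v < j.+1] \subset [set v | dist e r v < j] :|: S j.
  by apply/subsetP => v; rewrite !inE ltnS leq_eqVlt orbC.
apply: leq_trans (subset_leq_card sub) _.
rewrite cardsU.
have := IH (ltnW hj); have := S_bound j.
have : D ^ j <= D ^ R by rewrite leq_pexp2l // ltnW.
lia.
Qed.

End Count.

Theorem theorem3p4 :
  forall n k : nat, exists N : nat,
  forall (T : finType) (e : rel T),
    irreflexive e -> strongly_connected e -> N <= #|T| ->
    (exists c : seq T, dicycle e c /\ n <= size c)
    \/ (exists cs : seq (seq T), narrow_semi_chain e n k cs)
    \/ (exists (m : nat) (x y : T) (F G : seq (seq T)),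
          (k - 1) * n + 3 <= m /\ system e x y m 1 F G /\ n_short_system n x y F G).
Proof.
move=> n k.
set m := (k - 1) * n + 3.
set D := (m.+1) ^ n.-1.
set R := k * (2 * n) + 2.
exists (R * D ^ R).+1 => T e irr sc hN.
case: (classic (exists c : seq T, dicycle e c /\ n <= size c)) => [H|H]; first by left.
have nolong : forall c, dicycle e c -> size c < n.
  move=> c dc; rewrite ltnNge; apply/negP => nc; apply: H; by exists c.
right.
case: (classic (exists x, D < #|[set y | e x y]|)) => [[x hx]|Hdeg].
  right; have [z hz] := exists_hub sc nolong hx.
  have [y [F [G [s1 s2]]]] := hub_system irr sc nolong hz.
  by exists m, x, y, F, G.
have hdeg : forall x, #|[set y | e x y]| <= D.
  by move=> x; rewrite leqNgt; apply/negP => hx; apply: Hdeg; exists x.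
have [r _] : exists r : T, true.
  by have /card_gt0P [r _] : 0 < #|T| by lia.
case: (classic (exists v, R <= dist e r v)) => [[v hv]|Hfar].
  left; have [p [s w]] := distE sc r v.
  apply: (lemB sc nolong w) => [q wq|]; first by rewrite s; apply: (dist_min sc).
  by rewrite s.
exfalso.
have all : [set v | dist e r v < R] = setT.
  apply/setP => v; rewrite !inE ltnNge; apply/negP => hv; apply: Hfar; by exists v.
have := U_bound sc r hdeg (leqnn R) (_ : 0 < D).
rewrite all cardsT => h.
have : 0 < D by rewrite expn_gt0.
move=> /h; lia.
Qed.
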